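(* Every COI-graph $G$ has a proxy graph, i.e. there exists a NOI-graph $G'$ on the same vertex set such that the kernels of the hybrid Laplacians $\mathcal{L}(G)$ and $\mathcal{L}(G')$ are identical.
   Context: A hybrid graph $G=(V,E_L+E_Q)$ has a set $E_L$ of $L$-edges and a set $E_Q$ of $Q$-edges. Its hybrid Laplacian is $\mathcal{L}(G)=L(S_l)+Q(S_q)$ with $S_l=(V,E_L)$, $S_q=(V,E_Q)$, $L=D-A$ the signed Laplacian and $Q=D+A$ the signless Laplacian. $G$ is a NOI-graph if $S_q$ is bipartite and no vertex is incident to both a $Q$-edge and an $L$-edge. $G$ is a COI-graph if $S_q$ is bipartite with a bipartition $(P_1,P_2)$ of $V$ (every $Q$-edge joining $P_1$ to $P_2$) such that every $L$-edge joins two vertices in the same part. *)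

(* Defs.v *)
From HB Require Import structures.
From mathcomp Require Import all_boot all_order all_algebra.
Set Implicit Arguments. Unset Strict Implicit. Unset Printing Implicit Defensive.
Import Order.TTheory GRing.Theory Num.Theory.
Local Open Scope ring_scope.

Definition simple_rel (n : nat) (e : rel 'I_n) : Prop :=
  (forall x y, e x y = e y x) /\ (forall x, ~~ e x x).

Definition hybrid_graph (n : nat) (eL eQ : rel 'I_n) : Prop :=
  simple_rel eL /\ simple_rel eQ /\ (forall x y, ~~ (eL x y && eQ x y)).

Definition deg (n : nat) (e : rel 'I_n) (i : 'I_n) : nat := #|[set j | e i j]|.

Definition degmx (R : nzRingType) (n : nat) (e : rel 'I_n) : 'M[R]_n :=
  \matrix_(i, j) (if i == j then (deg e i)%:R else 0).

Definition adjmx (R : nzRingType) (n : nat) (e : rel 'I_n) : 'M[R]_n :=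
  \matrix_(i, j) (e i j)%:R.

Definition lapL (R : nzRingType) (n : nat) (e : rel 'I_n) : 'M[R]_n :=
  degmx R e - adjmx R e.
Definition lapQ (R : nzRingType) (n : nat) (e : rel 'I_n) : 'M[R]_n :=
  degmx R e + adjmx R e.

Definition hybrid_lap (R : nzRingType) (n : nat) (eL eQ : rel 'I_n) : 'M[R]_n :=
  lapL R eL + lapQ R eQ.

Definition in_kernel (R : nzRingType) (n : nat) (M : 'M[R]_n) (v : 'cV[R]_n) : Prop :=
  M *m v = 0.

Definition bipartite (n : nat) (e : rel 'I_n) : Prop :=
  exists P : 'I_n -> bool, forall x y, e x y -> P x != P y.

Definition NOI_graph (n : nat) (eL eQ : rel 'I_n) : Prop :=
  bipartite eQ /\
  forall v : 'I_n, ~ ((exists u, eQ v u) /\ (exists w, eL v w)).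

(* COI-graph: bipartition (P1,P2) (encoded by P : 'I_n -> bool) with every
   Q-edge between the parts and every L-edge inside a part *)
Definition COI_graph (n : nat) (eL eQ : rel 'I_n) : Prop :=
  exists P : 'I_n -> bool,
    (forall x y, eQ x y -> P x != P y) /\ (forall x y, eL x y -> P x = P y).

(* Main.v *)
Require Import Defs.
From HB Require Import structures.
From mathcomp Require Import all_boot all_order all_algebra.
From mathcomp Require Import ring.
Import Order.TTheory GRing.Theory Num.Theory.
Local Open Scope ring_scope.
Lemma deg_sum (R : nzRingType) n (e : rel 'I_n) i :
  (deg e i)%:R = \sum_j (e i j)%:R :> R.
Proof.
rewrite /deg cardsE -sum1_card natr_sum big_mkcond /=.
by apply: eq_bigr => j _; rewrite -topredE /=; case: (e i j).
Qed.

Lemma lap_row (R : comNzRingType) n (eL eQ : rel 'I_n) (v : 'cV[R]_n) i :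
  (hybrid_lap R eL eQ *m v) i 0 =
  \sum_j ((eL i j)%:R * (v i 0 - v j 0) + (eQ i j)%:R * (v i 0 + v j 0)).
Proof.
rewrite mxE /hybrid_lap /lapL /lapQ.
under eq_bigr => j _ do rewrite !mxE.
transitivity (\sum_j (if j == i then ((deg eL i)%:R + (deg eQ i)%:R) * v i 0 else 0)
   + \sum_j ((eQ i j)%:R - (eL i j)%:R) * v j 0).
  rewrite -big_split /=; apply: eq_bigr => j _.
  by rewrite eq_sym; case: eqP => [->|_]; ring.
transitivity (\sum_j ((eL i j)%:R + (eQ i j)%:R) * v i 0
   + \sum_j ((eQ i j)%:R - (eL i j)%:R) * v j 0); last first.
  rewrite -big_split /=; apply: eq_bigr => j _; ring.
by rewrite -big_mkcond /= big_pred1_eq -mulr_suml big_split /= !deg_sum.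
Qed.
Lemma kerP (R : realFieldType) n (eL eQ : rel 'I_n) (v : 'cV[R]_n) :
  (forall x y, eL x y = eL y x) -> (forall x y, eQ x y = eQ y x) ->
  (forall x y, ~~ (eL x y && eQ x y)) ->
  in_kernel (hybrid_lap R eL eQ) v <->
  (forall x y, eL x y -> v x 0 = v y 0) /\ (forall x y, eQ x y -> v x 0 = - v y 0).
Proof.
move=> sL sQ D; split; last first.
  move=> [HL HQ]; apply/matrixP => i k; rewrite ord1 lap_row mxE.
  apply: big1 => j _.
  case eLij: (eL i j); case eQij: (eQ i j).
  - by move: (D i j); rewrite eLij eQij.
  - rewrite (HL _ _ eLij) /=; ring.
  - rewrite (HQ _ _ eQij) /=; ring.
  - rewrite /=; ring.
move=> Hk.
have row0 i : \sum_j ((eL i j)%:R * (v i 0 - v j 0) + (eQ i j)%:R * (v i 0 + v j 0)) = 0.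
  by rewrite -lap_row Hk mxE.
pose g i j := (eL i j)%:R * v i 0 * (v i 0 - v j 0) + (eQ i j)%:R * v i 0 * (v i 0 + v j 0).
have A0 : \sum_i \sum_j g i j = 0.
  rewrite big1 // => i _.
  transitivity (v i 0 * \sum_j ((eL i j)%:R * (v i 0 - v j 0) + (eQ i j)%:R * (v i 0 + v j 0))).
    by rewrite mulr_sumr; apply: eq_bigr => j _; rewrite /g; ring.
  by rewrite row0 mulr0.
have S0 : \sum_i \sum_j ((eL i j)%:R * (v i 0 - v j 0) ^+ 2 + (eQ i j)%:R * (v i 0 + v j 0) ^+ 2) = 0.
  transitivity (\sum_i \sum_j g i j + \sum_i \sum_j g j i).
    rewrite -big_split /=; apply: eq_bigr => i _; rewrite -big_split /=.
    by apply: eq_bigr => j _; rewrite /g (sL j i) (sQ j i); ring.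
  by rewrite [X in _ + X]exchange_big /= A0 addr0.
have nn i j : 0 <= (eL i j)%:R * (v i 0 - v j 0) ^+ 2 + (eQ i j)%:R * (v i 0 + v j 0) ^+ 2 :> R.
  by rewrite addr_ge0 // mulr_ge0 // sqr_ge0.
have E0 i j : (eL i j)%:R * (v i 0 - v j 0) ^+ 2 + (eQ i j)%:R * (v i 0 + v j 0) ^+ 2 = 0 :> R.
  move/eqP: S0; rewrite psumr_eq0 => [/allP/(_ i)|i' _]; last first.
    by rewrite sumr_ge0.
  rewrite mem_index_enum => /(_ isT) /implyP /(_ isT).
  rewrite psumr_eq0 => [/allP/(_ j)|j' _] //.
  by rewrite mem_index_enum => /(_ isT) /implyP /(_ isT) /eqP.
split=> x y H; move: (E0 x y); rewrite H /= mul1r => /eqP.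
  rewrite paddr_eq0; [|exact: sqr_ge0|by rewrite mulr_ge0 ?sqr_ge0].
  by rewrite expf_eq0 /= subr_eq0 => /andP [/eqP ->].
rewrite paddr_eq0; [|by rewrite mulr_ge0 ?sqr_ge0|exact: sqr_ge0].
by rewrite expf_eq0 /= addr_eq0 => /andP [_ /eqP ->].
Qed.

Lemma path_const n (e : rel 'I_n) (T : Type) (w : 'I_n -> T) :
  (forall x y, e x y -> w x = w y) -> forall x y, connect e x y -> w x = w y.
Proof.
move=> H x y /connectP [p pth ->]; elim: p x pth => //= z p IH x /andP [exz pth].
by rewrite (H _ _ exz) (IH _ pth).
Qed.

Theorem mainTheorem7 (R : realFieldType) (n : nat) (eL eQ : rel 'I_n) :
  hybrid_graph eL eQ -> COI_graph eL eQ ->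
  exists eL' eQ' : rel 'I_n,
    hybrid_graph eL' eQ' /\ NOI_graph eL' eQ' /\
    forall v : 'cV[R]_n,
      in_kernel (hybrid_lap R eL eQ) v <-> in_kernel (hybrid_lap R eL' eQ') v.
Proof.
move=> [[sL iL] [[sQ iQ] D]] [P [PQ PL]].
pose e := [rel x y | eL x y || eQ x y].
have se : connect_sym e.
  by apply: sym_connect_sym => x y /=; rewrite sL sQ.
pose C := connect e.
pose mono x := [forall z, C x z ==> (P z == P x)].
pose eL' := [rel x y | [&& C x y, x != y, mono x & mono y]].
pose eQ' := [rel x y | C x y && (P x != P y)].
have monoP x z : mono x -> C x z -> P z = P x.
  by move/forallP/(_ z)/implyP => H /H /eqP.
have sL' : forall x y, eL' x y = eL' y x.
  by move=> x y /=; rewrite /C se eq_sym; case: (mono x); case: (mono y);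
     rewrite ?andbF ?andbT.
have sQ' : forall x y, eQ' x y = eQ' y x.
  by move=> x y /=; rewrite /C se eq_sym.
have D' : forall x y, ~~ (eL' x y && eQ' x y).
  move=> x y /=; apply/negP => /andP [/and4P [cxy _ mx _] /andP [_ /negP]].
  by apply; rewrite (monoP _ _ mx cxy).
exists eL', eQ'; split.
  split; first by split=> // x /=; rewrite eqxx /= andbF.
  by split; first by split=> // x /=; rewrite eqxx andbF.
split.
  split; first by exists P => x y /andP [].
  move=> x [[u /andP [cxu Pxu]] [w /and4P [_ _ mx _]]].
  by move/negP: Pxu; apply; rewrite (monoP _ _ mx cxu).
move=> v.
pose w x := if P x then v x 0 else - v x 0.
have wE x y : w x = w y <->
   ((P x = P y -> v x 0 = v y 0) /\ (P x != P y -> v x 0 = - v y 0)).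
  rewrite /w; case: (P x); case: (P y) => /=.
  - by split; [move=> H; split=> // _ | case=> /(_ erefl)].
  - by split; [move=> H; split=> // _ | case=> _ /(_ isT)].
  - split; first by move=> H; split=> // _; rewrite -H opprK.
    by case=> _ /(_ isT) ->; rewrite opprK.
  - split; first by move/oppr_inj => H; split=> // _.
    by case=> /(_ erefl) ->.
have Kw1 : (forall x y, eL x y -> v x 0 = v y 0) /\ (forall x y, eQ x y -> v x 0 = - v y 0)
     <-> (forall x y, C x y -> w x = w y).
  split.
    move=> [HL HQ]; apply: path_const => x y /orP [] exy; apply/wE; split.
    - by move=> _; apply: HL.
    - by rewrite (PL _ _ exy) eqxx.
    - by move=> E; move: (PQ _ _ exy); rewrite E eqxx.
    - by move=> _; apply: HQ.
  move=> H; split=> x y exy.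
    have exy' : e x y by rewrite /= exy.
    have /wE [+ _] := H x y (@connect1 _ e x y exy').
    by apply; apply: PL.
  have exy' : e x y by rewrite /= exy orbT.
  have /wE [_] := H x y (@connect1 _ e x y exy').
  by apply; apply: PQ.
have Kw2 : (forall x y, eL' x y -> v x 0 = v y 0) /\ (forall x y, eQ' x y -> v x 0 = - v y 0)
     <-> (forall x y, C x y -> w x = w y).
  split.
    move=> [HL HQ] x y cxy.
    case mx: (mono x).
      case: (eqVneq x y) => [-> //|nxy].
      have my : mono y.
        apply/forallP => z; apply/implyP => cyz.
        have cxz : C x z by apply: connect_trans cxy cyz.
        by rewrite (monoP _ _ mx cxz) (monoP _ _ mx cxy).
      apply/wE; split; first by move=> _; apply: HL; rewrite /= cxy nxy mx my.
      by rewrite (monoP _ _ mx cxy) eqxx.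
    move/negbT: mx => /forallPn [z]; rewrite negb_imply => /andP [cxz Pzx].
    have eQside a b : C a b -> P a != P b -> w a = w b.
      by move=> cab Pab; apply/wE; split=> [E|_]; [move/eqP: Pab|apply: HQ; rewrite /= cab].
    case: (eqVneq (P x) (P y)) => Pxy; last by apply: eQside.
    have cyz : C y z by apply: connect_trans (cxz); rewrite /C se.
    rewrite (eQside x z cxz); last by rewrite eq_sym.
    by rewrite (eQside y z cyz) // -Pxy eq_sym.
  move=> H; split=> x y.
    move=> /and4P [cxy _ mx _]; have /wE [+ _] := H x y cxy; apply.
    by rewrite (monoP _ _ mx cxy).
  by move=> /andP [cxy Pxy]; have /wE [_] := H x y cxy; apply.
apply: (iff_trans (kerP _ _ _ _ v sL sQ D)); apply: (iff_trans Kw1).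
apply: iff_sym; apply: (iff_trans (kerP _ _ _ _ v sL' sQ' D')); exact: Kw2.
Qed.
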